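(* Let the functions satisfy the $M=2$ system and the boundary conditions (B) (see context). Then for all $s>0$: (i) $\eta_0x_0y_0+\eta_1x_0y_1+(-\xi_0+\eta_2+s)x_0y_2+x_1y_0+x_2y_1-\xi_1x_1y_2-\xi_2x_2y_2+\eta_0=0$; (ii) $\xi_2=\eta_0-e_1$; (iii) $sx_0y_2=\eta_0\xi_2+\eta_1-\xi_1+e_2-\eta_0$; (iv) $x_0y_0+x_1y_1+x_2y_2=0$; (v) $-3e_3+e_2(e_1+\eta_0-1)-\eta_0(e_1-\eta_0+1)(e_1+\eta_0-2)+(2e_1-1)\eta_1+(1-e_1)\xi_1-sx_0y_1+sx_0y_2(-2\eta_0+\xi_2+2)+sx_1y_2-3(\eta_2+\xi_0)=0$; (vi) $3e_3+e_2(-2e_1+\eta_0-4)+\eta_0(e_1-\eta_0+1)(2e_1-\eta_0+2)-(e_1+1)\eta_1+(2e_1-3\eta_0+4)\xi_1+2sx_0y_1+sx_0y_2(2e_1-\eta_0+2)+sx_1y_2+3\xi_0=0$; (vii) $e_2(e_1+\eta_0-1)-\eta_0(e_1-\eta_0+1)(e_1+\eta_0-2)+(-e_1+3\eta_0-4)\eta_1+(1-e_1)\xi_1-sx_0y_1-sx_0y_2(e_1+\eta_0-2)-2sx_1y_2+3\eta_2=0$; (viii) $e_3+\xi_0-\eta_2-\eta_0\xi_1-\xi_2\eta_1-x_2y_0+\eta_0x_2y_1-\xi_2x_1y_0+\eta_0\xi_2x_1y_1-\xi_1x_0y_0+(\xi_0-\eta_2-\xi_2\eta_1)x_0y_1+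\xi_1\eta_1x_0y_2+(\xi_0-\eta_2-\eta_0\xi_1)x_1y_2+\eta_1x_2y_2=0$.
   Context: Fix complex parameters $\nu_0,\nu_1,\nu_2$ with $\nu_2-\nu_1\notin\mathbb Z$ (generic conditions), and let $e_1=\nu_0+\nu_1+\nu_2$, $e_2=\nu_0\nu_1+\nu_0\nu_2+\nu_1\nu_2$, $e_3=\nu_0\nu_1\nu_2$. The $M=2$ system is the following system for smooth complex-valued functions $x_0,x_1,x_2,y_0,y_1,y_2,\xi_0,\xi_1,\xi_2,\eta_0,\eta_1,\eta_2$ of $s\in(0,\infty)$, with $'=d/ds$: $sx_0'=-\eta_0x_0-x_1$, $sx_1'=-\eta_1x_0-x_2$, $sx_2'=-\eta_2x_0-sx_0+\xi_0x_0+\xi_1x_1+\xi_2x_2$, $sy_2'=-\xi_2y_2+y_1$, $sy_1'=-\xi_1y_2+y_0$, $sy_0'=-\xi_0y_2+sy_2+\eta_0y_0+\eta_1y_1+\eta_2y_2$, $\xi_0'=-x_0y_0$, $\xi_1'=-x_0y_1$, $\xi_2'=-x_0y_2$, $\eta_0'=-x_0y_2$, $\eta_1'=-x_1y_2$, $\eta_2'=-x_2y_2$. Boundary conditions (B): as $s\to0^+$, $\eta_0,\eta_1,\eta_2\to0$, $\xi_0\to-e_3$, $\xi_1\to e_2$, $\xi_2\to-e_1$, and $x_j(s)y_k(s)\to0$, $s\,x_j(s)y_k(s)\to0$ for all $j,k\in\{0,1,2\}$. (These encode the small-$s$ behaviour of the variables arising from Strahov's Hamiltonian formulation of the $M=2$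 hard-edge gap probability on $(0,s)$.) *)

(* Defs.v *)
From Stdlib Require Import Reals ZArith List.
Import ListNotations.
Open Scope R_scope.

Definition Cpx : Type := (R * R)%type.
Definition RtoC (r : R) : Cpx := (r, 0).
Definition Cadd (z w : Cpx) : Cpx := (fst z + fst w, snd z + snd w).
Definition Cmul (z w : Cpx) : Cpx :=
  (fst z * fst w - snd z * snd w, fst z * snd w + snd z * fst w).
Definition Copp (z : Cpx) : Cpx := (- fst z, - snd z).
Definition Csub (z w : Cpx) : Cpx := Cadd z (Copp w).

Declare Scope C_scope.
Delimit Scope C_scope with C.
Notation "x + y" := (Cadd x y) : C_scope.
Notation "x - y" := (Csub x y) : C_scope.
Notation "x * y" := (Cmul x y) : C_scope.
Notation "- x" := (Copp x) : C_scope.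

Definition has_cderiv (f : R -> Cpx) (s : R) (l : Cpx) : Prop :=
  derivable_pt_lim (fun t => fst (f t)) s (fst l) /\
  derivable_pt_lim (fun t => snd (f t)) s (snd l).

Definition clim0p (f : R -> Cpx) (l : Cpx) : Prop :=
  limit1_in (fun t => fst (f t)) (fun t => 0 < t) (fst l) 0 /\
  limit1_in (fun t => snd (f t)) (fun t => 0 < t) (snd l) 0.

Open Scope C_scope.

Definition e1 (nu0 nu1 nu2 : Cpx) : Cpx := nu0 + nu1 + nu2.
Definition e2 (nu0 nu1 nu2 : Cpx) : Cpx := nu0 * nu1 + nu0 * nu2 + nu1 * nu2.
Definition e3 (nu0 nu1 nu2 : Cpx) : Cpx := nu0 * nu1 * nu2.

Definition s_deriv_eq (f : R -> Cpx) (s : R) (rhs : Cpx) : Prop :=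
  exists d : Cpx, has_cderiv f s d /\ RtoC s * d = rhs.

Definition M2_system (x0 x1 x2 y0 y1 y2 xi0 xi1 xi2 eta0 eta1 eta2 : R -> Cpx)
  : Prop :=
  forall s : R, 0 < s ->
  let S := RtoC s in
  s_deriv_eq x0 s ( - eta0 s * x0 s - x1 s) /\
  s_deriv_eq x1 s ( - eta1 s * x0 s - x2 s) /\
  s_deriv_eq x2 s ( - eta2 s * x0 s - S * x0 s + xi0 s * x0 s
                    + xi1 s * x1 s + xi2 s * x2 s) /\
  s_deriv_eq y2 s ( - xi2 s * y2 s + y1 s) /\
  s_deriv_eq y1 s ( - xi1 s * y2 s + y0 s) /\
  s_deriv_eq y0 s ( - xi0 s * y2 s + S * y2 s + eta0 s * y0 s
                    + eta1 s * y1 s + eta2 s * y2 s) /\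
  has_cderiv xi0 s ( - (x0 s * y0 s)) /\
  has_cderiv xi1 s ( - (x0 s * y1 s)) /\
  has_cderiv xi2 s ( - (x0 s * y2 s)) /\
  has_cderiv eta0 s ( - (x0 s * y2 s)) /\
  has_cderiv eta1 s ( - (x1 s * y2 s)) /\
  has_cderiv eta2 s ( - (x2 s * y2 s)).

Definition bc_B (nu0 nu1 nu2 : Cpx)
  (x0 x1 x2 y0 y1 y2 xi0 xi1 xi2 eta0 eta1 eta2 : R -> Cpx) : Prop :=
  clim0p eta0 (RtoC 0) /\ clim0p eta1 (RtoC 0) /\ clim0p eta2 (RtoC 0) /\
  clim0p xi0 ( - e3 nu0 nu1 nu2) /\
  clim0p xi1 (e2 nu0 nu1 nu2) /\
  clim0p xi2 ( - e1 nu0 nu1 nu2) /\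
  (forall (x y : R -> Cpx),
     In x (x0 :: x1 :: x2 :: nil) -> In y (y0 :: y1 :: y2 :: nil) ->
     clim0p (fun s => x s * y s) (RtoC 0) /\
     clim0p (fun s => RtoC s * (x s * y s)) (RtoC 0)).

(* Main.v *)
Require Import Defs.
From Stdlib Require Import Reals ZArith List Lra.
Open Scope R_scope.

Lemma Cpx_ring : ring_theory (RtoC 0) (RtoC 1) Cadd Cmul Csub Copp (@eq Cpx).
Proof.
  constructor; intros;
  repeat match goal with z : Cpx |- _ => destruct z end;
  cbv [RtoC Cadd Cmul Csub Copp fst snd]; f_equal; ring.
Qed.
Add Ring CpxRing : Cpx_ring.

Lemma real_const (f : R -> R) (l : R) :
  (forall x, 0 < x -> derivable_pt_lim f x 0) ->
  limit1_in f (fun t => 0 < t) l 0 -> forall s, 0 < s -> f s = l.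
Proof.
  intros Hd Hl s Hs.
  assert (Hsm : forall eps, eps > 0 -> Rabs (f s - l) < eps).
  { intros eps Heps. destruct (Hl eps Heps) as [alp [Halp H]].
    set (t := Rmin s alp / 2).
    assert (Ht0 : 0 < t) by (unfold t; pose proof (Rmin_glb_lt s alp 0 Hs Halp); lra).
    assert (Hts : t < s) by (unfold t; pose proof (Rmin_l s alp); lra).
    assert (Hta : t < alp) by (unfold t; pose proof (Rmin_r s alp); lra).
    destruct (MVT_cor2 f (fun _ => 0) t s Hts) as [c [Hc _]]; [intros c Hc; apply Hd; lra|].
    assert (E : f s = f t) by lra.
    rewrite E. specialize (H t). simpl in H. unfold R_dist in H.
    apply H. split; [exact Ht0|]. rewrite Rminus_0_r, Rabs_right; lra. }
  destruct (Req_dec (f s) l) as [E|E]; [exact E|].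
  exfalso. specialize (Hsm (Rabs (f s - l))).
  assert (0 < Rabs (f s - l)) by (apply Rabs_pos_lt; lra). specialize (Hsm H). lra.
Qed.

Lemma cpx_const (F : R -> Cpx) :
  (forall x, 0 < x -> has_cderiv F x (RtoC 0)) ->
  clim0p F (RtoC 0) -> forall s, 0 < s -> F s = RtoC 0.
Proof.
  intros Hd [H1 H2] s Hs.
  rewrite (surjective_pairing (F s)).
  unfold RtoC in *; simpl in *.
  f_equal; [apply (real_const (fun t => fst (F t))) | apply (real_const (fun t => snd (F t)))]; auto; intros x Hx; apply Hd; auto.
Qed.

Open Scope C_scope.

Lemma hc_add f g s df dg : has_cderiv f s df -> has_cderiv g s dg ->
  has_cderiv (fun t => f t + g t) s (df + dg).
Proof.
  intros [A B] [C D]; split; simpl.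
  - exact (derivable_pt_lim_plus _ _ _ _ _ A C).
  - exact (derivable_pt_lim_plus _ _ _ _ _ B D).
Qed.

Lemma hc_opp f s df : has_cderiv f s df -> has_cderiv (fun t => - f t) s (- df).
Proof.
  intros [A B]; split; simpl.
  - exact (derivable_pt_lim_opp _ _ _ A).
  - exact (derivable_pt_lim_opp _ _ _ B).
Qed.

Lemma dpl_val f x l l' : derivable_pt_lim f x l -> l = l' -> derivable_pt_lim f x l'.
Proof. intros H E; subst; exact H. Qed.

Lemma hc_mul f g s df dg : has_cderiv f s df -> has_cderiv g s dg ->
  has_cderiv (fun t => f t * g t) s (df * g s + f s * dg).
Proof.
  intros [A B] [C D]; split.
  - eapply dpl_val.
    + exact (derivable_pt_lim_minus _ _ _ _ _
      (derivable_pt_lim_mult _ _ _ _ _ A C) (derivable_pt_lim_mult _ _ _ _ _ B D)).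
    + simpl. ring.
  - eapply dpl_val.
    + exact (derivable_pt_lim_plus _ _ _ _ _
      (derivable_pt_lim_mult _ _ _ _ _ A D) (derivable_pt_lim_mult _ _ _ _ _ B C)).
    + simpl. ring.
Qed.

Lemma hc_const (c : Cpx) s : has_cderiv (fun _ => c) s (RtoC 0).
Proof. split; apply derivable_pt_lim_const. Qed.

Lemma hc_id s : has_cderiv (fun t => RtoC t) s (RtoC 1).
Proof. split; [apply derivable_pt_lim_id | apply derivable_pt_lim_const]. Qed.

Lemma hc_sub f g s df dg : has_cderiv f s df -> has_cderiv g s dg ->
  has_cderiv (fun t => f t - g t) s (df - dg).
Proof. intros A B. exact (hc_add _ _ _ _ _ A (hc_opp _ _ _ B)). Qed.

Lemma sd_add f g s Lf Lg : s_deriv_eq f s Lf -> s_deriv_eq g s Lg ->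
  s_deriv_eq (fun t => f t + g t) s (Lf + Lg).
Proof. intros [d1 [A E1]] [d2 [B E2]]. exists (d1 + d2). split; [apply hc_add; auto|].
  subst. ring. Qed.
Lemma sd_sub f g s Lf Lg : s_deriv_eq f s Lf -> s_deriv_eq g s Lg ->
  s_deriv_eq (fun t => f t - g t) s (Lf - Lg).
Proof. intros [d1 [A E1]] [d2 [B E2]]. exists (d1 - d2). split; [apply hc_sub; auto|].
  subst. ring. Qed.
Lemma sd_opp f s Lf : s_deriv_eq f s Lf -> s_deriv_eq (fun t => - f t) s (- Lf).
Proof. intros [d1 [A E1]]. exists (- d1). split; [apply hc_opp; auto|]. subst. ring. Qed.
Lemma sd_mul f g s Lf Lg : s_deriv_eq f s Lf -> s_deriv_eq g s Lg ->
  s_deriv_eq (fun t => f t * g t) s (Lf * g s + f s * Lg).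
Proof. intros [d1 [A E1]] [d2 [B E2]]. exists (d1 * g s + f s * d2). split; [apply hc_mul; auto|].
  subst. ring. Qed.
Lemma sd_const (c : Cpx) s : s_deriv_eq (fun _ => c) s (RtoC 0).
Proof. exists (RtoC 0). split; [apply hc_const|]. ring. Qed.
Lemma sd_id s : s_deriv_eq (fun t => RtoC t) s (RtoC s).
Proof. exists (RtoC 1). split; [apply hc_id|]. ring. Qed.
Lemma sd_of f s d : has_cderiv f s d -> s_deriv_eq f s (RtoC s * d).
Proof. intros H. exists d. split; auto. Qed.

Lemma RtoC_nz_cancel s z : 0 < s -> RtoC s * z = RtoC 0 -> z = RtoC 0.
Proof.
  intros Hs E. destruct z as [a b]. unfold RtoC, Cmul in E; simpl in E.
  injection E; intros E2 E1. unfold RtoC.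
  f_equal; [apply (Rmult_eq_reg_l s) | apply (Rmult_eq_reg_l s)]; try lra; nra.
Qed.

Lemma sd_conclude f s L : s_deriv_eq f s L -> L = RtoC 0 -> 0 < s -> has_cderiv f s (RtoC 0).
Proof. intros [d [A E]] EL Hs. rewrite EL in E. rewrite <- (RtoC_nz_cancel s d Hs E). exact A. Qed.

Lemma cl_add f g lf lg : clim0p f lf -> clim0p g lg -> clim0p (fun t => f t + g t) (lf + lg).
Proof. intros [A B] [C D]; split; simpl; apply limit_plus; auto. Qed.
Lemma cl_opp f lf : clim0p f lf -> clim0p (fun t => - f t) (- lf).
Proof. intros [A B]; split; simpl; apply limit_Ropp; auto. Qed.
Lemma cl_sub f g lf lg : clim0p f lf -> clim0p g lg -> clim0p (fun t => f t - g t) (lf - lg).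
Proof. intros A B. exact (cl_add _ _ _ _ A (cl_opp _ _ B)). Qed.
Lemma cl_mul f g lf lg : clim0p f lf -> clim0p g lg -> clim0p (fun t => f t * g t) (lf * lg).
Proof. intros [A B] [C D]; split; simpl.
  - apply limit_minus; apply limit_mul; auto.
  - apply limit_plus; apply limit_mul; auto. Qed.
Lemma cl_const (c : Cpx) : clim0p (fun _ => c) c.
Proof. split; simpl. - exact (limit_free (fun _ => fst c) _ 0 0). - exact (limit_free (fun _ => snd c) _ 0 0). Qed.
Lemma cl_ext f g l : (forall t, 0 < t -> f t = g t) -> clim0p g l -> clim0p f l.
Proof.
  intros Efg [A B]; split; intros eps He.
  - destruct (A eps He) as [a [Ha H]]; exists a; split; auto; intros x [Hx Hd].
    rewrite (Efg x Hx); apply H; auto.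
  - destruct (B eps He) as [a [Ha H]]; exists a; split; auto; intros x [Hx Hd].
    rewrite (Efg x Hx); apply H; auto.
Qed.
Lemma cl_val f l l' : clim0p f l -> l = l' -> clim0p f l'.
Proof. intros H E; subst; auto. Qed.

Lemma sub0_eq (a b : Cpx) : a - b = RtoC 0 -> a = b.
Proof. intros H. transitivity ((a - b) + b); [ring | rewrite H; ring]. Qed.
Lemma C2 : RtoC 2 = RtoC 1 + RtoC 1.
Proof. unfold RtoC, Cadd; simpl; f_equal; ring. Qed.
Lemma C3 : RtoC 3 = RtoC 1 + RtoC 1 + RtoC 1.
Proof. unfold RtoC, Cadd; simpl; f_equal; ring. Qed.
Lemma C4 : RtoC 4 = RtoC 1 + RtoC 1 + RtoC 1 + RtoC 1.
Proof. unfold RtoC, Cadd; simpl; f_equal; ring. Qed.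

Ltac sdt := first [ eassumption | apply sd_id | apply sd_const
  | eapply sd_add | eapply sd_sub | eapply sd_mul | eapply sd_opp ].
Ltac clt := first [ eassumption | apply cl_const
  | eapply cl_add | eapply cl_sub | eapply cl_mul | eapply cl_opp ].
Ltac derivs Hsys t Ht :=
  let HS := fresh "HS" in
  pose proof (Hsys t Ht) as HS; cbv zeta in HS;
  destruct HS as [Dx0 [Dx1 [Dx2 [Dy2 [Dy1 [Dy0 [Da0 [Da1 [Da2 [Dh0 [Dh1 Dh2]]]]]]]]]]];
  apply sd_of in Da0; apply sd_of in Da1; apply sd_of in Da2;
  apply sd_of in Dh0; apply sd_of in Dh1; apply sd_of in Dh2.


Theorem mainTheorem6 (nu0 nu1 nu2 : Cpx)
  (x0 x1 x2 y0 y1 y2 xi0 xi1 xi2 eta0 eta1 eta2 : R -> Cpx)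
  (Hgen : forall k : Z, nu2 - nu1 <> RtoC (IZR k))
  (Hsys : M2_system x0 x1 x2 y0 y1 y2 xi0 xi1 xi2 eta0 eta1 eta2)
  (HB : bc_B nu0 nu1 nu2 x0 x1 x2 y0 y1 y2 xi0 xi1 xi2 eta0 eta1 eta2) :
  forall s : R, 0 < s ->
  let E1 := e1 nu0 nu1 nu2 in
  let E2 := e2 nu0 nu1 nu2 in
  let E3 := e3 nu0 nu1 nu2 in
  let S := RtoC s in
  let X0 := x0 s in let X1 := x1 s in let X2 := x2 s in
  let Y0 := y0 s in let Y1 := y1 s in let Y2 := y2 s in
  let A0 := xi0 s in let A1 := xi1 s in let A2 := xi2 s in
  let H0 := eta0 s in let H1 := eta1 s in let H2 := eta2 s in
  let one := RtoC 1 in let two := RtoC 2 in let three := RtoC 3 in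
  let four := RtoC 4 in let zero := RtoC 0 in
  (* (i) *)
  H0 * X0 * Y0 + H1 * X0 * Y1 + (- A0 + H2 + S) * X0 * Y2 + X1 * Y0
    + X2 * Y1 - A1 * X1 * Y2 - A2 * X2 * Y2 + H0 = zero /\
  (* (ii) *)
  A2 = H0 - E1 /\
  (* (iii) *)
  S * X0 * Y2 = H0 * A2 + H1 - A1 + E2 - H0 /\
  (* (iv) *)
  X0 * Y0 + X1 * Y1 + X2 * Y2 = zero /\
  (* (v) *)
  - (three * E3) + E2 * (E1 + H0 - one)
    - H0 * (E1 - H0 + one) * (E1 + H0 - two)
    + (two * E1 - one) * H1 + (one - E1) * A1 - S * X0 * Y1
    + S * X0 * Y2 * (- (two * H0) + A2 + two) + S * X1 * Y2
    - three * (H2 + A0) = zero /\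
  (* (vi) *)
  three * E3 + E2 * (- (two * E1) + H0 - four)
    + H0 * (E1 - H0 + one) * (two * E1 - H0 + two)
    - (E1 + one) * H1 + (two * E1 - three * H0 + four) * A1
    + two * S * X0 * Y1 + S * X0 * Y2 * (two * E1 - H0 + two)
    + S * X1 * Y2 + three * A0 = zero /\
  (* (vii) *)
  E2 * (E1 + H0 - one) - H0 * (E1 - H0 + one) * (E1 + H0 - two)
    + (- E1 + three * H0 - four) * H1 + (one - E1) * A1 - S * X0 * Y1
    - S * X0 * Y2 * (E1 + H0 - two) - two * S * X1 * Y2 + three * H2 = zero /\
  (* (viii) *)
  E3 + A0 - H2 - H0 * A1 - A2 * H1 - X2 * Y0 + H0 * X2 * Y1
    - A2 * X1 * Y0 + H0 * A2 * X1 * Y1 - A1 * X0 * Y0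
    + (A0 - H2 - A2 * H1) * X0 * Y1 + A1 * H1 * X0 * Y2
    + (A0 - H2 - H0 * A1) * X1 * Y2 + H1 * X2 * Y2 = zero.
Proof.
  destruct HB as [L0 [L1 [L2 [La0 [La1 [La2 Lp]]]]]].
  destruct (Lp x0 y0) as [P00 Q00]; [left; reflexivity | left; reflexivity | ].
  destruct (Lp x0 y1) as [P01 Q01]; [left; reflexivity | right; left; reflexivity | ].
  destruct (Lp x0 y2) as [P02 Q02]; [left; reflexivity | right; right; left; reflexivity | ].
  destruct (Lp x1 y0) as [P10 Q10]; [right; left; reflexivity | left; reflexivity | ].
  destruct (Lp x1 y1) as [P11 Q11]; [right; left; reflexivity | right; left; reflexivity | ].
  destruct (Lp x1 y2) as [P12 Q12]; [right; left; reflexivity | right; right; left; reflexivity | ].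
  destruct (Lp x2 y0) as [P20 Q20]; [right; right; left; reflexivity | left; reflexivity | ].
  destruct (Lp x2 y1) as [P21 Q21]; [right; right; left; reflexivity | right; left; reflexivity | ].
  destruct (Lp x2 y2) as [P22 Q22]; [right; right; left; reflexivity | right; right; left; reflexivity | ].
  assert (Hii : forall t, 0 < t -> (xi2 t) - ((eta0 t) - (e1 nu0 nu1 nu2)) = RtoC 0).
  { apply (cpx_const (fun t => (xi2 t) - ((eta0 t) - (e1 nu0 nu1 nu2)))).
    - intros t Ht. derivs Hsys t Ht.
      eapply sd_conclude; [repeat sdt | | exact Ht].
      cbv beta; rewrite ?C2, ?C3, ?C4; ring.
    - apply (cl_ext _ (fun t => (xi2 t) - ((eta0 t) - (e1 nu0 nu1 nu2)))).
      + intros t Ht. cbv beta; rewrite ?C2, ?C3, ?C4; ring.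
      + eapply cl_val; [repeat clt | ]. cbv beta; rewrite ?C2, ?C3, ?C4; ring. }
  assert (Hii' : forall t, 0 < t -> xi2 t = eta0 t - (e1 nu0 nu1 nu2)) by (intros t Ht; apply sub0_eq; auto).
  assert (Hiii : forall t, 0 < t -> (RtoC t) * (x0 t) * (y2 t) - ((eta0 t) * (xi2 t) + (eta1 t) - (xi1 t) + (e2 nu0 nu1 nu2) - (eta0 t)) = RtoC 0).
  { apply (cpx_const (fun t => (RtoC t) * (x0 t) * (y2 t) - ((eta0 t) * (xi2 t) + (eta1 t) - (xi1 t) + (e2 nu0 nu1 nu2) - (eta0 t)))).
    - intros t Ht. derivs Hsys t Ht.
      eapply sd_conclude; [repeat sdt | | exact Ht].
      cbv beta; rewrite ?C2, ?C3, ?C4; ring.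
    - apply (cl_ext _ (fun t => (RtoC t) * ((x0 t) * (y2 t)) - ((eta0 t) * (xi2 t) + (eta1 t) - (xi1 t) + (e2 nu0 nu1 nu2) - (eta0 t)))).
      + intros t Ht. cbv beta; rewrite ?C2, ?C3, ?C4; ring.
      + eapply cl_val; [repeat clt | ]. cbv beta; rewrite ?C2, ?C3, ?C4; ring. }
  assert (Hiii' : forall t, 0 < t -> RtoC t * x0 t * y2 t = eta0 t * xi2 t + eta1 t - xi1 t + (e2 nu0 nu1 nu2) - eta0 t) by (intros t Ht; apply sub0_eq; auto).
  assert (Hiv : forall t, 0 < t -> (x0 t) * (y0 t) + (x1 t) * (y1 t) + (x2 t) * (y2 t) = RtoC 0).
  { apply (cpx_const (fun t => (x0 t) * (y0 t) + (x1 t) * (y1 t) + (x2 t) * (y2 t))).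
    - intros t Ht. derivs Hsys t Ht.
      eapply sd_conclude; [repeat sdt | | exact Ht].
      cbv beta; rewrite ?C2, ?C3, ?C4; ring.
    - apply (cl_ext _ (fun t => ((x0 t) * (y0 t)) + ((x1 t) * (y1 t)) + ((x2 t) * (y2 t)))).
      + intros t Ht. cbv beta; rewrite ?C2, ?C3, ?C4; ring.
      + eapply cl_val; [repeat clt | ]. cbv beta; rewrite ?C2, ?C3, ?C4; ring. }
  assert (Hi : forall t, 0 < t -> (eta0 t) * (x0 t) * (y0 t) + (eta1 t) * (x0 t) * (y1 t) + (- (xi0 t) + (eta2 t) + (RtoC t)) * (x0 t) * (y2 t) + (x1 t) * (y0 t) + (x2 t) * (y1 t) - (xi1 t) * (x1 t) * (y2 t) - (xi2 t) * (x2 t) * (y2 t) + (eta0 t) = RtoC 0).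
  { apply (cpx_const (fun t => (eta0 t) * (x0 t) * (y0 t) + (eta1 t) * (x0 t) * (y1 t) + (- (xi0 t) + (eta2 t) + (RtoC t)) * (x0 t) * (y2 t) + (x1 t) * (y0 t) + (x2 t) * (y1 t) - (xi1 t) * (x1 t) * (y2 t) - (xi2 t) * (x2 t) * (y2 t) + (eta0 t))).
    - intros t Ht. derivs Hsys t Ht.
      eapply sd_conclude; [repeat sdt | | exact Ht].
      cbv beta; rewrite ?C2, ?C3, ?C4; ring.
    - apply (cl_ext _ (fun t => (eta0 t) * ((x0 t) * (y0 t)) + (eta1 t) * ((x0 t) * (y1 t)) + (- (xi0 t) + (eta2 t)) * ((x0 t) * (y2 t)) + (RtoC t) * ((x0 t) * (y2 t)) + ((x1 t) * (y0 t)) + ((x2 t) * (y1 t)) - (xi1 t) * ((x1 t) * (y2 t)) - (xi2 t) * ((x2 t) * (y2 t)) + (eta0 t))).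
      + intros t Ht. cbv beta; rewrite ?C2, ?C3, ?C4; ring.
      + eapply cl_val; [repeat clt | ]. cbv beta; rewrite ?C2, ?C3, ?C4; ring. }
  assert (Hviii : forall t, 0 < t -> (e3 nu0 nu1 nu2) + (xi0 t) - (eta2 t) - (eta0 t) * (xi1 t) - (xi2 t) * (eta1 t) - (x2 t) * (y0 t) + (eta0 t) * (x2 t) * (y1 t)
    - (xi2 t) * (x1 t) * (y0 t) + (eta0 t) * (xi2 t) * (x1 t) * (y1 t) - (xi1 t) * (x0 t) * (y0 t)
    + ((xi0 t) - (eta2 t) - (xi2 t) * (eta1 t)) * (x0 t) * (y1 t) + (xi1 t) * (eta1 t) * (x0 t) * (y2 t)
    + ((xi0 t) - (eta2 t) - (eta0 t) * (xi1 t)) * (x1 t) * (y2 t) + (eta1 t) * (x2 t) * (y2 t) = RtoC 0).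
  { apply (cpx_const (fun t => (e3 nu0 nu1 nu2) + (xi0 t) - (eta2 t) - (eta0 t) * (xi1 t) - (xi2 t) * (eta1 t) - (x2 t) * (y0 t) + (eta0 t) * (x2 t) * (y1 t)
    - (xi2 t) * (x1 t) * (y0 t) + (eta0 t) * (xi2 t) * (x1 t) * (y1 t) - (xi1 t) * (x0 t) * (y0 t)
    + ((xi0 t) - (eta2 t) - (xi2 t) * (eta1 t)) * (x0 t) * (y1 t) + (xi1 t) * (eta1 t) * (x0 t) * (y2 t)
    + ((xi0 t) - (eta2 t) - (eta0 t) * (xi1 t)) * (x1 t) * (y2 t) + (eta1 t) * (x2 t) * (y2 t))).
    - intros t Ht. derivs Hsys t Ht.
      eapply sd_conclude; [repeat sdt | | exact Ht].
      cbv beta; rewrite ?C2, ?C3, ?C4; ring.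
    - apply (cl_ext _ (fun t => (e3 nu0 nu1 nu2) + (xi0 t) - (eta2 t) - (eta0 t) * (xi1 t) - (xi2 t) * (eta1 t) - ((x2 t) * (y0 t)) + (eta0 t) * ((x2 t) * (y1 t))
    - (xi2 t) * ((x1 t) * (y0 t)) + (eta0 t) * (xi2 t) * ((x1 t) * (y1 t)) - (xi1 t) * ((x0 t) * (y0 t))
    + ((xi0 t) - (eta2 t) - (xi2 t) * (eta1 t)) * ((x0 t) * (y1 t)) + (xi1 t) * (eta1 t) * ((x0 t) * (y2 t))
    + ((xi0 t) - (eta2 t) - (eta0 t) * (xi1 t)) * ((x1 t) * (y2 t)) + (eta1 t) * ((x2 t) * (y2 t)))).
      + intros t Ht. cbv beta; rewrite ?C2, ?C3, ?C4; ring.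
      + eapply cl_val; [repeat clt | ]. cbv beta; rewrite ?C2, ?C3, ?C4; ring. }
  assert (Hv : forall t, 0 < t -> - ((RtoC 3) * (e3 nu0 nu1 nu2)) + (e2 nu0 nu1 nu2) * ((e1 nu0 nu1 nu2) + (eta0 t) - (RtoC 1))
    - (eta0 t) * ((e1 nu0 nu1 nu2) - (eta0 t) + (RtoC 1)) * ((e1 nu0 nu1 nu2) + (eta0 t) - (RtoC 2))
    + ((RtoC 2) * (e1 nu0 nu1 nu2) - (RtoC 1)) * (eta1 t) + ((RtoC 1) - (e1 nu0 nu1 nu2)) * (xi1 t) - (RtoC t) * (x0 t) * (y1 t)
    + (RtoC t) * (x0 t) * (y2 t) * (- ((RtoC 2) * (eta0 t)) + (xi2 t) + (RtoC 2)) + (RtoC t) * (x1 t) * (y2 t)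
    - (RtoC 3) * ((eta2 t) + (xi0 t)) = RtoC 0).
  { apply (cpx_const (fun t => - ((RtoC 3) * (e3 nu0 nu1 nu2)) + (e2 nu0 nu1 nu2) * ((e1 nu0 nu1 nu2) + (eta0 t) - (RtoC 1))
    - (eta0 t) * ((e1 nu0 nu1 nu2) - (eta0 t) + (RtoC 1)) * ((e1 nu0 nu1 nu2) + (eta0 t) - (RtoC 2))
    + ((RtoC 2) * (e1 nu0 nu1 nu2) - (RtoC 1)) * (eta1 t) + ((RtoC 1) - (e1 nu0 nu1 nu2)) * (xi1 t) - (RtoC t) * (x0 t) * (y1 t)
    + (RtoC t) * (x0 t) * (y2 t) * (- ((RtoC 2) * (eta0 t)) + (xi2 t) + (RtoC 2)) + (RtoC t) * (x1 t) * (y2 t)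
    - (RtoC 3) * ((eta2 t) + (xi0 t)))).
    - intros t Ht. derivs Hsys t Ht.
      eapply sd_conclude; [repeat sdt | | exact Ht].
      pose proof (Hii' t Ht) as Hii_t. pose proof (Hiv t Ht) as Hiv_t. pose proof (Hiii' t Ht) as Hiii_t. rewrite Hii_t in Hiii_t.
      cbv beta; rewrite Hii_t. transitivity ((RtoC 2) * (RtoC t) * ((x0 t) * (y0 t) + (x1 t) * (y1 t) + (x2 t) * (y2 t)) + (RtoC t) * (x0 t) * (y2 t) * ((RtoC t) * (x0 t) * (y2 t) - ((eta0 t) * ((eta0 t) - (e1 nu0 nu1 nu2)) + (eta1 t) - (xi1 t) + (e2 nu0 nu1 nu2) - (eta0 t)))).
      * cbv beta; rewrite ?C2, ?C3, ?C4; ring.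
      * rewrite Hiv_t, Hiii_t; ring.
    - apply (cl_ext _ (fun t => - ((RtoC 3) * (e3 nu0 nu1 nu2)) + (e2 nu0 nu1 nu2) * ((e1 nu0 nu1 nu2) + (eta0 t) - (RtoC 1))
    - (eta0 t) * ((e1 nu0 nu1 nu2) - (eta0 t) + (RtoC 1)) * ((e1 nu0 nu1 nu2) + (eta0 t) - (RtoC 2))
    + ((RtoC 2) * (e1 nu0 nu1 nu2) - (RtoC 1)) * (eta1 t) + ((RtoC 1) - (e1 nu0 nu1 nu2)) * (xi1 t) - (RtoC t) * ((x0 t) * (y1 t))
    + (RtoC t) * ((x0 t) * (y2 t)) * (- ((RtoC 2) * (eta0 t)) + (xi2 t) + (RtoC 2)) + (RtoC t) * ((x1 t) * (y2 t))
    - (RtoC 3) * ((eta2 t) + (xi0 t)))).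
      + intros t Ht. cbv beta; rewrite ?C2, ?C3, ?C4; ring.
      + eapply cl_val; [repeat clt | ]. cbv beta; rewrite ?C2, ?C3, ?C4; ring. }
  assert (Hvi : forall t, 0 < t -> (RtoC 3) * (e3 nu0 nu1 nu2) + (e2 nu0 nu1 nu2) * (- ((RtoC 2) * (e1 nu0 nu1 nu2)) + (eta0 t) - (RtoC 4))
    + (eta0 t) * ((e1 nu0 nu1 nu2) - (eta0 t) + (RtoC 1)) * ((RtoC 2) * (e1 nu0 nu1 nu2) - (eta0 t) + (RtoC 2))
    - ((e1 nu0 nu1 nu2) + (RtoC 1)) * (eta1 t) + ((RtoC 2) * (e1 nu0 nu1 nu2) - (RtoC 3) * (eta0 t) + (RtoC 4)) * (xi1 t)
    + (RtoC 2) * (RtoC t) * (x0 t) * (y1 t) + (RtoC t) * (x0 t) * (y2 t) * ((RtoC 2) * (e1 nu0 nu1 nu2) - (eta0 t) + (RtoC 2))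
    + (RtoC t) * (x1 t) * (y2 t) + (RtoC 3) * (xi0 t) = RtoC 0).
  { apply (cpx_const (fun t => (RtoC 3) * (e3 nu0 nu1 nu2) + (e2 nu0 nu1 nu2) * (- ((RtoC 2) * (e1 nu0 nu1 nu2)) + (eta0 t) - (RtoC 4))
    + (eta0 t) * ((e1 nu0 nu1 nu2) - (eta0 t) + (RtoC 1)) * ((RtoC 2) * (e1 nu0 nu1 nu2) - (eta0 t) + (RtoC 2))
    - ((e1 nu0 nu1 nu2) + (RtoC 1)) * (eta1 t) + ((RtoC 2) * (e1 nu0 nu1 nu2) - (RtoC 3) * (eta0 t) + (RtoC 4)) * (xi1 t)
    + (RtoC 2) * (RtoC t) * (x0 t) * (y1 t) + (RtoC t) * (x0 t) * (y2 t) * ((RtoC 2) * (e1 nu0 nu1 nu2) - (eta0 t) + (RtoC 2))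
    + (RtoC t) * (x1 t) * (y2 t) + (RtoC 3) * (xi0 t))).
    - intros t Ht. derivs Hsys t Ht.
      eapply sd_conclude; [repeat sdt | | exact Ht].
      pose proof (Hii' t Ht) as Hii_t. pose proof (Hiv t Ht) as Hiv_t. pose proof (Hiii' t Ht) as Hiii_t. rewrite Hii_t in Hiii_t.
      cbv beta; rewrite Hii_t. transitivity (- ((RtoC t) * ((x0 t) * (y0 t) + (x1 t) * (y1 t) + (x2 t) * (y2 t))) + (RtoC t) * (x0 t) * (y2 t) * ((RtoC t) * (x0 t) * (y2 t) - ((eta0 t) * ((eta0 t) - (e1 nu0 nu1 nu2)) + (eta1 t) - (xi1 t) + (e2 nu0 nu1 nu2) - (eta0 t)))).
      * cbv beta; rewrite ?C2, ?C3, ?C4; ring.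
      * rewrite Hiv_t, Hiii_t; ring.
    - apply (cl_ext _ (fun t => (RtoC 3) * (e3 nu0 nu1 nu2) + (e2 nu0 nu1 nu2) * (- ((RtoC 2) * (e1 nu0 nu1 nu2)) + (eta0 t) - (RtoC 4))
    + (eta0 t) * ((e1 nu0 nu1 nu2) - (eta0 t) + (RtoC 1)) * ((RtoC 2) * (e1 nu0 nu1 nu2) - (eta0 t) + (RtoC 2))
    - ((e1 nu0 nu1 nu2) + (RtoC 1)) * (eta1 t) + ((RtoC 2) * (e1 nu0 nu1 nu2) - (RtoC 3) * (eta0 t) + (RtoC 4)) * (xi1 t)
    + (RtoC 2) * ((RtoC t) * ((x0 t) * (y1 t))) + (RtoC t) * ((x0 t) * (y2 t)) * ((RtoC 2) * (e1 nu0 nu1 nu2) - (eta0 t) + (RtoC 2))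
    + (RtoC t) * ((x1 t) * (y2 t)) + (RtoC 3) * (xi0 t))).
      + intros t Ht. cbv beta; rewrite ?C2, ?C3, ?C4; ring.
      + eapply cl_val; [repeat clt | ]. cbv beta; rewrite ?C2, ?C3, ?C4; ring. }
  assert (Hvii : forall t, 0 < t -> (e2 nu0 nu1 nu2) * ((e1 nu0 nu1 nu2) + (eta0 t) - (RtoC 1)) - (eta0 t) * ((e1 nu0 nu1 nu2) - (eta0 t) + (RtoC 1)) * ((e1 nu0 nu1 nu2) + (eta0 t) - (RtoC 2))
    + (- (e1 nu0 nu1 nu2) + (RtoC 3) * (eta0 t) - (RtoC 4)) * (eta1 t) + ((RtoC 1) - (e1 nu0 nu1 nu2)) * (xi1 t) - (RtoC t) * (x0 t) * (y1 t)
    - (RtoC t) * (x0 t) * (y2 t) * ((e1 nu0 nu1 nu2) + (eta0 t) - (RtoC 2)) - (RtoC 2) * (RtoC t) * (x1 t) * (y2 t) + (RtoC 3) * (eta2 t) = RtoC 0).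
  { apply (cpx_const (fun t => (e2 nu0 nu1 nu2) * ((e1 nu0 nu1 nu2) + (eta0 t) - (RtoC 1)) - (eta0 t) * ((e1 nu0 nu1 nu2) - (eta0 t) + (RtoC 1)) * ((e1 nu0 nu1 nu2) + (eta0 t) - (RtoC 2))
    + (- (e1 nu0 nu1 nu2) + (RtoC 3) * (eta0 t) - (RtoC 4)) * (eta1 t) + ((RtoC 1) - (e1 nu0 nu1 nu2)) * (xi1 t) - (RtoC t) * (x0 t) * (y1 t)
    - (RtoC t) * (x0 t) * (y2 t) * ((e1 nu0 nu1 nu2) + (eta0 t) - (RtoC 2)) - (RtoC 2) * (RtoC t) * (x1 t) * (y2 t) + (RtoC 3) * (eta2 t))).
    - intros t Ht. derivs Hsys t Ht.
      eapply sd_conclude; [repeat sdt | | exact Ht].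
      pose proof (Hii' t Ht) as Hii_t. pose proof (Hiv t Ht) as Hiv_t. pose proof (Hiii' t Ht) as Hiii_t. rewrite Hii_t in Hiii_t.
      cbv beta; rewrite Hii_t. transitivity (- ((RtoC t) * ((x0 t) * (y0 t) + (x1 t) * (y1 t) + (x2 t) * (y2 t))) + (RtoC t) * (x0 t) * (y2 t) * ((RtoC t) * (x0 t) * (y2 t) - ((eta0 t) * ((eta0 t) - (e1 nu0 nu1 nu2)) + (eta1 t) - (xi1 t) + (e2 nu0 nu1 nu2) - (eta0 t)))).
      * cbv beta; rewrite ?C2, ?C3, ?C4; ring.
      * rewrite Hiv_t, Hiii_t; ring.
    - apply (cl_ext _ (fun t => (e2 nu0 nu1 nu2) * ((e1 nu0 nu1 nu2) + (eta0 t) - (RtoC 1)) - (eta0 t) * ((e1 nu0 nu1 nu2) - (eta0 t) + (RtoC 1)) * ((e1 nu0 nu1 nu2) + (eta0 t) - (RtoC 2))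
    + (- (e1 nu0 nu1 nu2) + (RtoC 3) * (eta0 t) - (RtoC 4)) * (eta1 t) + ((RtoC 1) - (e1 nu0 nu1 nu2)) * (xi1 t) - (RtoC t) * ((x0 t) * (y1 t))
    - (RtoC t) * ((x0 t) * (y2 t)) * ((e1 nu0 nu1 nu2) + (eta0 t) - (RtoC 2)) - (RtoC 2) * ((RtoC t) * ((x1 t) * (y2 t))) + (RtoC 3) * (eta2 t))).
      + intros t Ht. cbv beta; rewrite ?C2, ?C3, ?C4; ring.
      + eapply cl_val; [repeat clt | ]. cbv beta; rewrite ?C2, ?C3, ?C4; ring. }
  intros s Hs. cbv zeta.
  split; [exact (Hi s Hs)|]. split; [exact (Hii' s Hs)|]. split; [exact (Hiii' s Hs)|].
  split; [exact (Hiv s Hs)|]. split; [exact (Hv s Hs)|]. split; [exact (Hvi s Hs)|].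
  split; [exact (Hvii s Hs)|]. exact (Hviii s Hs).
Qed.
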